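(* For every integer $k\ge1$ there is a family $\mathcal E_k$ of infinite subsets of $\omega$ with $|\mathcal E_k|=2^\omega$ such that: (a) if $e_0,\dots,e_{k-1}\in\mathcal E_k$ then $\bigcap_{i<k}e_i$ is infinite; (b) if $e_0,\dots,e_k$ are distinct elements of $\mathcal E_k$ then $\bigcap_{i\le k}e_i$ is finite; (c) for every uncountable $X\subseteq\mathcal E_k$ there are uncountable $X_0,\dots,X_k\subseteq X$ such that $\bigcap_{i\le k}\bigcup X_i$ is finite. *)

(* Defs.v *)
From mathcomp Require Import all_boot.
From mathcomp Require Export boolp classical_sets cardinality.
Set Implicit Arguments. Unset Strict Implicit. Unset Printing Implicit Defensive.

(* Main.v *)
Require Import Defs.
From mathcomp Require Import all_boot boolp classical_sets cardinality.
Local Open Scope classical_set_scope.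
Local Open Scope card_scope.
Set Implicit Arguments. Unset Strict Implicit.
Definition rr (n : nat) (f : set nat) : n.-tuple bool := [tuple `[< f i >] | i < n].
Definition TT k := {n : nat & k.-tuple (n.-tuple bool)}.
Definition ef k (f : set nat) : set nat :=
  (@pickle (TT k)) @` [set x : TT k | rr (tag x) f \in (tagged x : seq _)].

Lemma tnth_rr n f (i : 'I_n) : tnth (rr n f) i = `[< f i >].
Proof. by rewrite /rr tnth_mktuple. Qed.

Lemma rr_le m n f g : (m <= n)%N -> rr n f = rr n g -> rr m f = rr m g.
Proof.
move=> mn H; apply: eq_from_tnth => i; rewrite !tnth_rr.
by have := congr1 (fun t => tnth t (widen_ord mn i)) H; rewrite !tnth_rr.
Qed.

Lemma rr_neq f g : f <> g -> exists d, forall n, (d < n)%N -> rr n f <> rr n g.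
Proof.
move=> fg; have [d hd] : exists d, f d <> g d.
  apply: contra_notP fg => H; apply: funext => d.
  by apply: contra_notP H => hd; exists d.
exists d => n dn H; apply: hd.
have := congr1 (fun t => tnth t (Ordinal dn)) H; rewrite !tnth_rr /= => E.
by rewrite -(asboolE (f d)) E asboolE.
Qed.

Lemma sep k (f : 'I_k.+1 -> set nat) : injective f ->
  exists N, forall n, (N <= n)%N -> injective (fun i => rr n (f i)).
Proof.
move=> finj.
have /choice [d hd] : forall p : 'I_k.+1 * 'I_k.+1, exists d : nat, p.1 <> p.2 ->
    forall n, (d < n)%N -> rr n (f p.1) <> rr n (f p.2).
  move=> p.
  have [e|ne] := pselect (p.1 = p.2); first by exists 0%N.
  have [d hd] := rr_neq (fun E => ne (finj _ _ E)).
  by exists d.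
exists (\max_p d p).+1 => n Nn i j /= E.
have [//|ij] := pselect (i = j); exfalso; apply: (hd (i, j) ij n _ E).
apply: leq_ltn_trans Nn.
exact: leq_bigmax.
Qed.

Lemma no_big k n (t : k.-tuple (n.-tuple bool)) (h : 'I_k.+1 -> n.-tuple bool) :
  injective h -> ~ (forall i, h i \in (t : seq _)).
Proof.
move=> hinj hin.
have := @uniq_leq_size _ (map h (enum 'I_k.+1)) t.
rewrite map_inj_uniq // enum_uniq size_map size_enum_ord size_tuple ltnn.
move=> /(_ isT) H; suff : false by [].
apply: H => x /mapP [i _ ->]; exact: hin.
Qed.

Lemma fin_low k N : finite_set ((@pickle (TT k)) @` [set x : TT k | (tag x < N)%N]).
Proof.
apply: finite_image.
pose g := fun y : {n : 'I_N & k.-tuple (n.-tuple bool)} =>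
  (existT (fun n : nat => k.-tuple (n.-tuple bool)) (val (tag y)) (tagged y) : TT k).
apply: (@sub_finite_set _ _ (g @` setT)); last exact/finite_image/finite_finset.
move=> [n t] /= nN.
exists (existT (fun n : 'I_N => k.-tuple (n.-tuple bool)) (Ordinal nN) t) => //.
Qed.

Lemma ef_inj k : (1 <= k)%N -> injective (ef k).
Proof.
move=> hk f g; apply: contra_eq => /eqP fg; apply/eqP => E.
have [d hd] := rr_neq fg.
pose x : TT k := existT _ d.+1 [tuple rr d.+1 f | _ < k].
have : ef k f (pickle x).
  exists x => //=; rewrite /x /=.
  have := mem_tnth (Ordinal hk) [tuple rr d.+1 f | _ < k].
  by rewrite tnth_mktuple.
rewrite E => -[y /= hy /(pcan_inj pickleK) yx].
move: hy; rewrite yx /x /= => /mapP [i _] /esym.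
exact: hd.
Qed.
Lemma inf_ef k (fs : 'I_k -> set nat) :
  infinite_set [set c | forall i, ef k (fs i) c].
Proof.
pose g := fun n => @pickle (TT k) (existT _ n [tuple rr n (fs i) | i < k]).
have ginj : injective g.
  move=> m n /(pcan_inj pickleK) E; exact: (congr1 tag E).
move=> fin; apply: infinite_nat.
rewrite -(eq_finite_set (@inj_card_eq _ _ setT g (in2W ginj))).
apply: sub_finite_set fin => _ [n _ <-] i.
exists (existT _ n [tuple rr n (fs i) | i < k]) => //=.
have := mem_tnth i [tuple rr n (fs i) | i < k].
by rewrite tnth_mktuple.
Qed.

Lemma capfin k (fs : 'I_k.+1 -> set nat) M :
  (forall n, (M <= n)%N -> injective (fun i => rr n (fs i))) ->
  [set c | forall i, ef k (fs i) c] `<=` (@pickle (TT k)) @` [set x : TT k | (tag x < M)%N].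
Proof.
move=> hinj c hc.
have /choice [xs hxs] : forall i, exists x : TT k, rr (tag x) (fs i) \in (tagged x : seq _) /\ pickle x = c.
  by move=> i; have [x hx <-] := hc i; exists x.
have xsE i : xs i = xs ord0.
  by apply: (pcan_inj pickleK); rewrite (hxs i).2 (hxs ord0).2.
exists (xs ord0); last exact: (hxs ord0).2.
rewrite /=; case: ltnP => // Mn; exfalso.
apply: (@no_big k _ (tagged (xs ord0)) _ (hinj _ Mn)) => i.
by rewrite -(xsE i); exact: (hxs i).1.
Qed.

Lemma sub_countable' T (A B : set T) : A `<=` B -> countable B -> countable A.
Proof. by move=> AB; apply: sub_countable; apply: subset_card_le. Qed.

Lemma countableU' T (A B : set T) : countable A -> countable B -> countable (A `|` B).
Proof.
move=> cA cB.
apply: (@sub_countable' _ _ (\bigcup_(b in [set: bool]) (if b then A else B))).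
  by move=> x [Ax|Bx]; [exists true | exists false].
by apply: bigcup_countable => // -[].
Qed.
Unset Implicit Arguments. Set Strict Implicit.
Theorem lemma5p3 (k : nat) (hk : (1 <= k)%N) :
  exists E : set (set nat),
    (forall e, E e -> infinite_set e) /\
    (E #= [set: set nat]) /\
    (forall e : 'I_k -> set nat, (forall i, E (e i)) ->
        infinite_set (\bigcap_(i in [set: 'I_k]) e i)) /\
    (forall e : 'I_k.+1 -> set nat, injective e -> (forall i, E (e i)) ->
        finite_set (\bigcap_(i in [set: 'I_k.+1]) e i)) /\
    (forall X : set (set nat), X `<=` E -> ~ countable X ->
        exists Xs : 'I_k.+1 -> set (set nat),
          (forall i, Xs i `<=` X /\ ~ countable (Xs i)) /\
          finite_set (\bigcap_(i in [set: 'I_k.+1]) \bigcup_(x in Xs i) x)).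
Proof.
have efinj := ef_inj hk.
exists (ef k @` setT); split; [|split; [|split; [|split]]].
- move=> _ [f _ <-].
  have := @inf_ef k (fun _ : 'I_k => f); apply: sub_infinite_set.
  by move=> c /(_ (Ordinal hk)).
- exact: inj_card_eq (in2W efinj).
- move=> e he.
  have /choice [fs hfs] : forall i, exists f, ef k f = e i.
    by move=> i; have [f _ ?] := he i; exists f.
  have := @inf_ef k fs; apply: sub_infinite_set.
  by move=> c hc i _; rewrite -hfs; exact: hc.
- move=> e einj he.
  have /choice [fs hfs] : forall i, exists f, ef k f = e i.
    by move=> i; have [f _ ?] := he i; exists f.
  have fsinj : injective fs.
    by move=> i j E; apply: einj; rewrite -!hfs E.
  have [N hN] := sep fsinj.
  apply: sub_finite_set (fin_low k N).
  apply: subset_trans (capfin hN).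
  by move=> c hc i; rewrite hfs; exact: hc.
- move=> X XE Xunc.
  pose F := [set f | X (ef k f)].
  have XF : X = ef k @` F.
    apply/seteqP; split; last by move=> _ [f Ff <-].
    by move=> x Xx; have [f _ fx] := XE _ Xx; exists f => //; rewrite /F /= fx.
  have Func : ~ countable F.
    move=> cF; apply: Xunc; rewrite XF.
    exact: sub_countable (card_image_le _ _) cF.
  pose Phi n f := [set g | F g /\ rr n g = rr n f].
  pose C n := [set f | F f /\ countable (Phi n f)].
  have cC n : countable (C n).
    apply: (@sub_countable' _ _ (\bigcup_(s in [set: n.-tuple bool])
        [set f | C n f /\ rr n f = s])).
      by move=> f Cf; exists (rr n f).
    apply: bigcup_countable => // s _.
    have [[f0 [Cf0 f0s]]|none] := pselect (exists f, C n f /\ rr n f = s).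
      apply: (sub_countable' _ Cf0.2) => f [[Ff _] fs]; split => //.
      by rewrite fs f0s.
    by apply: (sub_countable' _ (countable0 _)) => f hf; apply: none; exists f.
  pose G := F `\` \bigcup_(n in [set: nat]) C n.
  have Ginf : infinite_set G.
    move=> /finite_set_countable cG; apply: Func.
    apply: (sub_countable' _ (countableU' cG (@bigcup_countable nat _ setT C (countableP _) (fun n _ => cC n)))) => //.
    move=> f Ff; have [Cf|nCf] := pselect ((\bigcup_(n in [set: nat]) C n) f).
      by right.
    by left.
  move/infiniteP: Ginf => /pcard_leP /injfunPex [h hfun hinj].
  pose g := fun i : 'I_k.+1 => h (val i).
  have ginj : injective g.
    by move=> i j E; apply: val_inj; apply: (hinj _ _ (mem_set I) (mem_set I) E).
  have [m hm] := sep ginj.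
  exists (fun i => ef k @` Phi m (g i)); split.
    move=> i; split.
      by move=> _ [f [Ff _] <-].
    move=> cI.
    have : G (g i) by apply: hfun.
    move=> [Fgi nC]; apply: nC; exists m => //; split => //.
    rewrite -(eq_countable (@inj_card_eq _ _ _ (ef k) (in2W efinj))).
    exact: cI.
  apply: sub_finite_set (fin_low k m) => c hc.
  have /choice [fs hfs] : forall i, exists f, Phi m (g i) f /\ ef k f c.
    by move=> i; have [_ [f Pf <-] cx] := hc i I; exists f.
  apply: (capfin (fs := fs)); last by move=> i; exact: (hfs i).2.
  move=> n mn i j /= E.
  apply: (hm m (leqnn m)) => /=.
  rewrite -(hfs i).1.2 -(hfs j).1.2.
  exact: rr_le mn E.
Qed.
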